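(* Let $X$ be a Polish space and $\mathcal{B}$ a countable base of its topology which is closed under finite intersections and contains $X$. The following are equivalent: (i) there is a monotone Borel hull operation on $\mathcal{M}$ with respect to $\mathcal{M}$; (ii) there is a $\mathcal{B}$-regular monotone Borel hull operation on $\mathcal{M}$ with respect to $\mathcal{M}$; (iii) there is a monotone Borel hull operation on $\mathtt{Baire}$ with respect to $\mathcal{M}$.
   Context: $\mathcal{M}$ is the $\sigma$-ideal of meager subsets of $X$, and $\mathtt{Baire}$ is the $\sigma$-algebra of subsets of $X$ with the Baire property. For a family $\mathcal{F}$ of subsets of $X$, a Borel hull operation on $\mathcal{F}$ with respect to $\mathcal{M}$ is a map $\psi$ from $\mathcal{F}$ to the Borel subsets of $X$ such that $A\subseteq\psi(A)$ and $\psi(A)\setminus A\in\mathcal{M}$ for every $A\in\mathcal{F}$. It is monotone if $\psi(A_1)\subseteq\psi(A_2)$ whenever $A_1\subseteq A_2$ are in $\mathcal{F}$. A monotone Borel hull operation $\varphi$ on $\mathcal{M}$ (so $\varphi(A)$ is a Borel meager set for each $A\in\mathcal{M}$) is $\mathcal{B}$-regular if $\varphi(A)\cap U\subseteq\varphi(A\cap U)$ for all $A\in\mathcal{M}$ and $U\in\mathcal{B}$. *)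

(* Defs.v *)
From Stdlib Require Import Reals.
Open Scope R_scope.

Definition subset {X : Type} (A B : X -> Prop) : Prop := forall x, A x -> B x.
Definition inter {X : Type} (A B : X -> Prop) : X -> Prop := fun x => A x /\ B x.
Definition setminus {X : Type} (A B : X -> Prop) : X -> Prop := fun x => A x /\ ~ B x.
Definition symdiff {X : Type} (A B : X -> Prop) : X -> Prop :=
  fun x => (A x /\ ~ B x) \/ (B x /\ ~ A x).
Definition fullset {X : Type} : X -> Prop := fun _ => True.

Definition is_metric {X : Type} (d : X -> X -> R) : Prop :=
  (forall x y, 0 <= d x y) /\
  (forall x y, d x y = 0 <-> x = y) /\
  (forall x y, d x y = d y x) /\
  (forall x y z, d x z <= d x y + d y z).

Definition metric_open {X : Type} (d : X -> X -> R) (U : X -> Prop) : Prop :=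
  forall x, U x -> exists eps, 0 < eps /\ forall y, d x y < eps -> U y.

Definition metric_complete {X : Type} (d : X -> X -> R) : Prop :=
  forall u : nat -> X,
    (forall eps, 0 < eps -> exists N, forall m n, (N <= m)%nat -> (N <= n)%nat -> d (u m) (u n) < eps) ->
    exists l, forall eps, 0 < eps -> exists N, forall n, (N <= n)%nat -> d (u n) l < eps.

(* separable: has a countable dense subset (the empty set if X is empty) *)
Definition metric_separable {X : Type} (d : X -> X -> R) : Prop :=
  (forall x : X, False) \/
  exists e : nat -> X, forall x eps, 0 < eps -> exists n, d x (e n) < eps.

Definition polish {X : Type} (op : (X -> Prop) -> Prop) : Prop :=
  exists d : X -> X -> R, is_metric d /\ metric_complete d /\ metric_separable d /\
    forall U, op U <-> metric_open d U.

Definition is_base {X : Type} (op : (X -> Prop) -> Prop) (B : (X -> Prop) -> Prop) : Prop :=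
  (forall V, B V -> op V) /\
  (forall U, op U -> forall x, U x -> exists V, B V /\ V x /\ subset V U).

Definition countable_family {X : Type} (B : (X -> Prop) -> Prop) : Prop :=
  exists e : nat -> (X -> Prop), forall U, B U <-> exists n, U = e n.

Inductive borel {X : Type} (op : (X -> Prop) -> Prop) : (X -> Prop) -> Prop :=
  | borel_open : forall U, op U -> borel op U
  | borel_compl : forall A, borel op A -> borel op (fun x => ~ A x)
  | borel_union : forall A : nat -> (X -> Prop),
      (forall n, borel op (A n)) -> borel op (fun x => exists n, A n x).

Definition closure {X : Type} (op : (X -> Prop) -> Prop) (A : X -> Prop) : X -> Prop :=
  fun x => forall U, op U -> U x -> exists y, U y /\ A y.
Definition interior {X : Type} (op : (X -> Prop) -> Prop) (A : X -> Prop) : X -> Prop :=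
  fun x => exists U, op U /\ U x /\ subset U A.
Definition nowhere_dense {X : Type} (op : (X -> Prop) -> Prop) (A : X -> Prop) : Prop :=
  forall x, ~ interior op (closure op A) x.
Definition meager {X : Type} (op : (X -> Prop) -> Prop) (A : X -> Prop) : Prop :=
  exists N : nat -> (X -> Prop), (forall n, nowhere_dense op (N n)) /\
    subset A (fun x => exists n, N n x).
Definition baire_property {X : Type} (op : (X -> Prop) -> Prop) (A : X -> Prop) : Prop :=
  exists U, op U /\ meager op (symdiff A U).

Definition borel_hull_op {X : Type} (op : (X -> Prop) -> Prop)
    (F : (X -> Prop) -> Prop) (psi : (X -> Prop) -> (X -> Prop)) : Prop :=
  forall A, F A -> subset A (psi A) /\ borel op (psi A) /\ meager op (setminus (psi A) A).

Definition monotone_on {X : Type} (F : (X -> Prop) -> Prop)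
    (psi : (X -> Prop) -> (X -> Prop)) : Prop :=
  forall A1 A2, F A1 -> F A2 -> subset A1 A2 -> subset (psi A1) (psi A2).

Definition B_regular {X : Type} (op : (X -> Prop) -> Prop) (B : (X -> Prop) -> Prop)
    (phi : (X -> Prop) -> (X -> Prop)) : Prop :=
  forall A U, meager op A -> B U -> subset (inter (phi A) U) (phi (inter A U)).

(* Main.v *)
Require Import Defs.
From Stdlib Require Import Reals Lra Classical FunctionalExtensionality PropExtensionality IndefiniteDescription Cantor.

Section S.
Context {X : Type} (op : (X -> Prop) -> Prop).

Lemma borel_ext (A A' : X -> Prop) : (forall x, A x <-> A' x) -> borel op A -> borel op A'.
Proof.
  intros H HA. replace A' with A; auto.
  apply functional_extensionality; intro x; apply propositional_extensionality; auto.
Qed.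

Lemma borel_inter_count (C : nat -> X -> Prop) :
  (forall n, borel op (C n)) -> borel op (fun x => forall n, C n x).
Proof.
  intros H.
  apply borel_ext with (A := fun x => ~ (exists n, ~ C n x)).
  - intros x; split.
    + intros H1 n. apply NNPP; intro H2; apply H1; eauto.
    + intros H1 [n Hn]; auto.
  - apply borel_compl. apply borel_union. intros n; apply borel_compl; auto.
Qed.

Lemma borel_union2 (A1 A2 : X -> Prop) :
  borel op A1 -> borel op A2 -> borel op (fun x => A1 x \/ A2 x).
Proof.
  intros H1 H2.
  apply borel_ext with (A := fun x => exists n, (match n with O => A1 | S _ => A2 end) x).
  - intros x; split.
    + intros [[|n] Hn]; auto.
    + intros [H|H]; [exists O | exists (S O)]; auto.
  - apply borel_union. intros [|n]; auto.
Qed.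

Lemma borel_compl_open (U : X -> Prop) : op U -> borel op (fun x => ~ U x).
Proof. intros; apply borel_compl, borel_open; auto. Qed.

Lemma meager_sub (A A' : X -> Prop) : subset A A' -> meager op A' -> meager op A.
Proof.
  intros Hs [N [HN Hc]]. exists N; split; auto. intros x Hx; apply Hc, Hs, Hx.
Qed.

Lemma meager_union_count (C : nat -> X -> Prop) :
  (forall k, meager op (C k)) -> meager op (fun x => exists k, C k x).
Proof.
  intros H.
  destruct (functional_choice (fun k N => (forall n, nowhere_dense op (N n)) /\
     subset (C k) (fun x => exists n, N n x)) H) as [N HN].
  exists (fun n => let (k, m) := of_nat n in N k m). split.
  - intros n. destruct (of_nat n) as [k m]. apply HN.
  - intros x [k Hk]. destruct (proj2 (HN k) x Hk) as [m Hm].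
    exists (to_nat (k, m)). rewrite cancel_of_to. exact Hm.
Qed.

Lemma meager_union2 (A1 A2 : X -> Prop) :
  meager op A1 -> meager op A2 -> meager op (fun x => A1 x \/ A2 x).
Proof.
  intros H1 H2.
  apply meager_sub with (A' := fun x => exists n, (match n with O => A1 | S _ => A2 end) x).
  - intros x [H|H]; [exists O | exists (S O)]; auto.
  - apply meager_union_count. intros [|n]; auto.
Qed.

End S.

Section T.
Context {X : Type} (op : (X -> Prop) -> Prop) (HX : polish op).

Lemma op_local (W : X -> Prop) :
  (forall x, W x -> exists U, op U /\ U x /\ subset U W) -> op W.
Proof.
  destruct HX as [d [_ [_ [_ Hop]]]]. intros H. apply Hop. intros x Hx.
  destruct (H x Hx) as [U [HU [Ux HUW]]]. apply Hop in HU.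
  destruct (HU x Ux) as [eps [He Hb]]. exists eps; split; auto.
Qed.

Lemma op_empty : op (fun _ => False).
Proof. apply op_local. intros x []. Qed.

Lemma op_inter (U V : X -> Prop) : op U -> op V -> op (inter U V).
Proof.
  destruct HX as [d [_ [_ [_ Hop]]]]. intros HU HV. apply Hop. intros x [Ux Vx].
  apply Hop in HU; apply Hop in HV.
  destruct (HU x Ux) as [e1 [He1 H1]]. destruct (HV x Vx) as [e2 [He2 H2]].
  exists (Rmin e1 e2). split.
  - apply Rmin_pos; auto.
  - intros y Hy. split.
    + apply H1. apply Rlt_le_trans with (1 := Hy), Rmin_l.
    + apply H2. apply Rlt_le_trans with (1 := Hy), Rmin_r.
Qed.

Lemma not_closure (A : X -> Prop) x : ~ closure op A x ->
  exists U, op U /\ U x /\ forall y, U y -> ~ A y.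
Proof.
  intros H. unfold closure in H.
  apply not_all_ex_not in H. destruct H as [U H].
  exists U. destruct (classic (op U)) as [HU|HU]; [|exfalso; apply H; intros HU'; contradiction].
  destruct (classic (U x)) as [Ux|Ux]; [|exfalso; apply H; intros _ Ux'; contradiction].
  repeat split; auto. intros y Uy Ay. apply H. intros _ _. eauto.
Qed.

Lemma closure_compl_open (A : X -> Prop) : op (fun x => ~ closure op A x).
Proof.
  apply op_local. intros x Hx. destruct (not_closure A x Hx) as [U [HU [Ux HA]]].
  exists U. repeat split; auto. intros y Uy Hc.
  destruct (Hc U HU Uy) as [z [Uz Az]]. apply (HA z Uz Az).
Qed.

Lemma borel_closure (A : X -> Prop) : borel op (closure op A).
Proof.
  apply borel_ext with (A := fun x => ~ ~ closure op A x).
  - intros x; split; [apply NNPP | auto].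
  - apply borel_compl_open, closure_compl_open.
Qed.

Lemma boundary_nd (O : X -> Prop) : op O ->
  nowhere_dense op (setminus (closure op O) O).
Proof.
  intros HO x [U [HU [Ux HUc]]].
  destruct (HUc x Ux U HU Ux) as [y [Uy [Cy _]]].
  destruct (Cy U HU Uy) as [z [Uz Oz]].
  destruct (HUc z Uz (inter U O) (op_inter U O HU HO) (conj Uz Oz)) as [w [[_ Ow] [_ nOw]]].
  contradiction.
Qed.

Lemma meager_baire (A : X -> Prop) : meager op A -> baire_property op A.
Proof.
  intros H. exists (fun _ => False). split; [apply op_empty|].
  apply meager_sub with (A' := A); auto. intros x [[Ax _]|[[] _]]; auto.
Qed.

End T.

Lemma i_to_ii (X : Type) (op : (X -> Prop) -> Prop) (B : (X -> Prop) -> Prop)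
  (HBbase : is_base op B) (HBcount : countable_family B)
  (HBinter : forall U V, B U -> B V -> B (inter U V))
  (HBfull : B fullset) phi :
  borel_hull_op op (meager op) phi -> monotone_on (meager op) phi ->
  exists phi, borel_hull_op op (meager op) phi /\ monotone_on (meager op) phi /\
                B_regular op B phi.
Proof.
  intros Hh Hm. destruct HBcount as [e He].
  assert (HeB : forall n, B (e n)) by (intros n; apply He; eauto).
  assert (Heop : forall n, op (e n)) by (intros n; apply HBbase, HeB).
  assert (Hmi : forall A U, meager op A -> meager op (inter A U)).
  { intros A U HA. apply meager_sub with (A' := A); auto. intros x [? ?]; auto. }
  exists (fun A x => forall n, e n x -> phi (inter A (e n)) x).
  split; [|split].
  - intros A HA. split; [|split].
    + intros x Ax n Hn. apply (Hh _ (Hmi A (e n) HA)). split; auto.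
    + apply borel_ext with (A := fun x => forall n, ~ e n x \/ phi (inter A (e n)) x).
      * intros x; split.
        -- intros H n Hn. destruct (H n); auto. contradiction.
        -- intros H n. destruct (classic (e n x)); auto.
      * apply borel_inter_count. intros n. apply borel_union2.
        -- apply borel_compl, borel_open; auto.
        -- apply (Hh _ (Hmi A (e n) HA)).
    + destruct (proj1 (He _) HBfull) as [k Hk].
      apply meager_sub with (A' := setminus (phi A) A).
      * intros x [H1 H2]. split; auto.
        assert (ek : e k x) by (rewrite <- Hk; exact I).
        apply (Hm (inter A (e k)) A (Hmi A _ HA) HA); auto.
        intros y [? ?]; auto.
      * apply Hh; auto.
  - intros A1 A2 H1 H2 Hs x H n Hn.
    apply (Hm (inter A1 (e n)) (inter A2 (e n)) (Hmi _ _ H1) (Hmi _ _ H2)); auto.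
    intros y [? ?]; split; auto.
  - intros A U HA HU x [H Ux] n Hn.
    destruct (proj1 (He _) HU) as [m Hm']. subst U.
    destruct (proj1 (He _) (HBinter _ _ (HeB m) (HeB n))) as [k Hk].
    assert (ek : e k x) by (rewrite <- Hk; split; auto).
    apply (Hm (inter A (e k)) (inter (inter A (e m)) (e n)) (Hmi _ _ HA)
             (Hmi _ _ (Hmi _ _ HA))); auto.
    intros y [Ay eky]. rewrite <- Hk in eky. destruct eky. repeat split; auto.
Qed.

Lemma meager_empty (X : Type) (op : (X -> Prop) -> Prop) : meager op (fun _ : X => False).
Proof.
  exists (fun _ _ => False). split.
  - intros n x [U [HU [Ux Hs]]]. destruct (Hs x Ux U HU Ux) as [y [_ []]].
  - intros x [].
Qed.

Lemma ii_to_iii (X : Type) (op : (X -> Prop) -> Prop) (B : (X -> Prop) -> Prop)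
  (HX : polish op)
  (HBbase : is_base op B) (HBcount : countable_family B) phi :
  borel_hull_op op (meager op) phi -> monotone_on (meager op) phi -> B_regular op B phi ->
   (exists psi, borel_hull_op op (baire_property op) psi /\
                monotone_on (baire_property op) psi).
Proof.
  intros Hh Hm Hr. destruct HBcount as [e He].
  assert (HeB : forall n, B (e n)) by (intros n; apply He; eauto).
  assert (Heop : forall n, op (e n)) by (intros n; apply HBbase, HeB).
  set (O := fun (A : X -> Prop) x => exists n, e n x /\ meager op (setminus (e n) A)).
  assert (Oop : forall A, op (O A)).
  { intros A. apply (op_local op HX). intros x [n [Hn Hmn]].
    exists (e n). repeat split; auto. intros y Hy. exists n; auto. }
  assert (OA : forall A, meager op (setminus (O A) A)).
  { intros A.
    apply meager_sub with (A' := fun x => exists n,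
       (fun x => meager op (setminus (e n) A) /\ setminus (e n) A x) x).
    - intros x [[n [Hn Hmn]] nA]. exists n. split; auto. split; auto.
    - apply meager_union_count. intros n.
      destruct (classic (meager op (setminus (e n) A))) as [H|H].
      + apply meager_sub with (A' := setminus (e n) A); auto. intros x [_ ?]; auto.
      + apply meager_sub with (A' := fun _ => False); [|apply meager_empty].
        intros x [H' _]; auto. }
  assert (AO : forall A, baire_property op A -> meager op (setminus A (O A))).
  { intros A [V [HV Hs]].
    assert (VO : subset V (O A)).
    { intros x Vx. destruct (proj2 HBbase V HV x Vx) as [W [HW [Wx WV]]].
      destruct (proj1 (He W) HW) as [n Hn]. subst W. exists n. split; auto.
      apply meager_sub with (A' := symdiff A V); auto.
      intros y [Hy nA]. right; split; auto. }
    apply meager_sub with (A' := symdiff A V); auto.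
    intros y [Ay nO]. left; split; auto. }
  assert (Ocl : forall A, subset (O A) (closure op (O A))).
  { intros A x Ox U HU Ux. eauto. }
  assert (Smeager : forall A, baire_property op A ->
     meager op (setminus A (closure op (O A)))).
  { intros A HA. apply meager_sub with (A' := setminus A (O A)); auto.
    intros x [Ax nC]. split; auto. intro; apply nC, Ocl; auto. }
  assert (clmono : forall (P Q : X -> Prop), subset P Q -> subset (closure op P) (closure op Q)).
  { intros P Q Hs x Hx U HU Ux. destruct (Hx U HU Ux) as [y [? ?]]. eauto. }
  assert (Omono : forall A1 A2, subset A1 A2 -> subset (O A1) (O A2)).
  { intros A1 A2 Hs x [n [Hn Hmn]]. exists n. split; auto.
    apply meager_sub with (A' := setminus (e n) A1); auto.
    intros y [Hy nA]. split; auto. }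
  exists (fun A x => closure op (O A) x \/ phi (setminus A (closure op (O A))) x).
  split.
  - intros A HA. pose proof (Smeager A HA) as HS. split; [|split].
    + intros x Ax. destruct (classic (closure op (O A) x)); auto.
      right. apply (Hh _ HS). split; auto.
    + apply borel_union2; [apply (borel_closure op HX) | apply (Hh _ HS)].
    + apply meager_sub with (A' := fun x =>
         (setminus (O A) A x \/ setminus (closure op (O A)) (O A) x) \/
          setminus (phi (setminus A (closure op (O A)))) (setminus A (closure op (O A))) x).
      * intros x [[Hc|Hp] nA].
        -- left. destruct (classic (O A x)); [left|right]; split; auto.
        -- right. split; auto. intros [? ?]; auto.
      * apply meager_union2; [apply meager_union2|].
        -- apply OA.
        -- exists (fun _ => setminus (closure op (O A)) (O A)). split.
           ++ intros _. apply (boundary_nd op HX), Oop.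
           ++ intros x Hx. exists 0%nat; auto.
        -- apply (Hh _ HS).
  - intros A1 A2 H1 H2 Hs x [Hc|Hp].
    + left. apply (clmono (O A1)); auto.
    + destruct (classic (closure op (O A2) x)) as [Hc|Hc]; [left; auto|right].
      destruct (not_closure op _ x Hc) as [U [HU [Ux HUO]]].
      destruct (proj2 HBbase U HU x Ux) as [W [HW [Wx WU]]].
      pose proof (Smeager _ H1) as S1. pose proof (Smeager _ H2) as S2.
      assert (Hi : meager op (inter (setminus A1 (closure op (O A1))) W)).
      { apply meager_sub with (A' := setminus A1 (closure op (O A1))); auto.
        intros y [? ?]; auto. }
      apply (Hm _ _ Hi S2).
      * intros y [[A1y nC1] Wy]. split; auto.
        intros Hc2. destruct (Hc2 W (proj1 HBbase W HW) Wy) as [z [Wz Oz]].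
        apply (HUO z (WU z Wz) Oz).
      * apply (Hr _ W S1 HW). split; auto.
Qed.

Theorem theorem3p2 (X : Type) (op : (X -> Prop) -> Prop) (B : (X -> Prop) -> Prop)
  (HX : polish op)
  (HBbase : is_base op B) (HBcount : countable_family B)
  (HBinter : forall U V, B U -> B V -> B (inter U V))
  (HBfull : B fullset) :
  ((exists phi, borel_hull_op op (meager op) phi /\ monotone_on (meager op) phi) <->
   (exists phi, borel_hull_op op (meager op) phi /\ monotone_on (meager op) phi /\
                B_regular op B phi)) /\
  ((exists phi, borel_hull_op op (meager op) phi /\ monotone_on (meager op) phi /\
                B_regular op B phi) <->
   (exists psi, borel_hull_op op (baire_property op) psi /\
                monotone_on (baire_property op) psi)).
Proof.
  split; split.
  - intros [phi [H1 H2]]. eapply i_to_ii; eauto.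
  - intros [phi [H1 [H2 _]]]. eauto.
  - intros [phi [H1 [H2 H3]]]. eapply ii_to_iii; eauto.
  - intros [psi [H1 H2]]. apply (i_to_ii X op B HBbase HBcount HBinter HBfull psi).
    + intros A HA. apply H1, (meager_baire op HX), HA.
    + intros A1 A2 HA1 HA2 Hs. apply H2; auto; apply (meager_baire op HX); auto.
Qed.
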